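(* Let $A\in\mathbb{R}^{n\times m}$ with $n<m$ have nonzero columns $\alpha_1,\dots,\alpha_m$, let $c_{ij}=\langle\alpha_i,\alpha_j\rangle$, and for each $i\in[m]$ define $\nu(i)=\max_{j\neq i}\frac{|c_{ij}|}{c_{ii}}$ and $\rho(i)=\frac{\nu(i)}{\nu(i)+1}$. Let $\rho(i_1)\ge\rho(i_2)\ge\dots\ge\rho(i_m)$ be these scores sorted in non-increasing order, and let $l^*$ be the largest integer $l\in\{0,1,\dots,m\}$ such that $\sum_{j=1}^{l}\rho(i_j)<\frac12$ (equivalently, when it exists, $l^*=\min\{l:\sum_{j=1}^l\rho(i_j)\ge\frac12\}-1$). Then every $x\in\mathbb{R}^m$ with $\|x\|_0\le l^*$ is the unique minimizer of $\min_{z\in\mathbb{R}^m}\|z\|_1$ subject to $Az=Ax$; that is, the sparsity level $SL$ of $\ell_1$ minimization with sensing matrix $A$ satisfies $SL\ge l^*$.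
   Context: $[m]=\{1,\dots,m\}$; $\|x\|_0$ is the number of nonzero entries of $x$. The sparsity level $SL$ of $A$ is the largest integer $s$ such that every $x$ with $\|x\|_0\le s$ is correctly (uniquely) recovered as the minimizer of $\min\|z\|_1$ s.t. $Az=Ax$. *)

(* Defs.v *)
From mathcomp Require Import all_boot all_order all_algebra.
From mathcomp Require Import reals.
Set Implicit Arguments. Unset Strict Implicit. Unset Printing Implicit Defensive.
Import Order.TTheory GRing.Theory Num.Theory.
Local Open Scope ring_scope.

Section Defs.
Variables (R : realType) (n m : nat).

Definition gram (A : 'M[R]_(n, m)) (i j : 'I_m) : R :=
  \sum_(k < n) A k i * A k j.

(* nu(i) = max_{j <> i} |c_ij| / c_ii  (values are >= 0, so 0 is a neutral
   element for the max over the nonempty index set) *)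
Definition nu (A : 'M[R]_(n, m)) (i : 'I_m) : R :=
  \big[Num.max/0]_(j < m | j != i) (`|gram A i j| / gram A i i).

Definition rho (A : 'M[R]_(n, m)) (i : 'I_m) : R := nu A i / (nu A i + 1).

Definition sorted_rho (A : 'M[R]_(n, m)) : seq R :=
  sort (fun a b : R => b <= a) [seq rho A i | i <- enum 'I_m].

Definition lstar (A : 'M[R]_(n, m)) : nat :=
  \max_(l < m.+1 | \sum_(r <- take l (sorted_rho A)) r < 2^-1) l.

Definition l0norm (x : 'cV[R]_m) : nat := #|[set i : 'I_m | x i 0 != 0]|.
Definition l1norm (x : 'cV[R]_m) : R := \sum_(i < m) `|x i 0|.

End Defs.

(* Main.v *)
Require Import Defs.
From mathcomp Require Import all_boot all_order all_algebra.
From mathcomp Require Import reals.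
From mathcomp Require Import lra.
Import Order.TTheory GRing.Theory Num.Theory.
Local Open Scope ring_scope.

Section Helpers.
Variable R : realType.

Lemma sum_take_step (a : R) (w : seq R) k : 0 <= a -> all (fun y => y <= a) w ->
  \sum_(r <- take k.+1 w) r <= a + \sum_(r <- take k w) r.
Proof.
move=> a0; elim: w k => [|c w IH] k /=.
  by rewrite !big_nil addr0.
case/andP=> ca aw; case: k => [|k].
  by rewrite take0 big_cons !big_nil !addr0.
rewrite [take _.+1 (c :: w)]/= !big_cons addrCA lerD2l; exact: IH.
Qed.

Lemma sorted_sub (u : seq R) : sorted (fun a b => b <= a) u -> all (fun y => 0 <= y) u ->
  forall t, subseq t u -> \sum_(r <- t) r <= \sum_(r <- take (size t) u) r.
Proof.
elim: u => [|a u IH] /=.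
  by move=> _ _ t /eqP-> /=.
move=> pu /andP[a0 au] [|b t] /=.
  by move=> _; rewrite !big_nil.
have su := path_sorted pu.
have allu : all (fun y => y <= a) u.
  have := order_path_min (fun (x y z : R) (h1 : x <= y) (h2 : z <= x) => le_trans h2 h1) pu.
  by [].
case: eqP => [-> st|_ st].
  by rewrite !big_cons lerD2l; exact: IH.
apply: le_trans (IH su au _ st) _.
by rewrite big_cons; apply: sum_take_step.
Qed.

Lemma sum_take_le (w : seq R) k : all (fun y => 0 <= y) w ->
  \sum_(r <- take k w) r <= \sum_(r <- w) r.
Proof.
move=> w0; rewrite -{2}(cat_take_drop k w) big_cat /= lerDl.
rewrite big_seq; apply: sumr_ge0 => r rd; apply: (allP w0 r); exact: mem_drop rd.
Qed.

Lemma le_bigmax0 (I : eqType) (F : I -> R) (s : seq I) j : j \in s ->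
  F j <= \big[Num.max/0]_(k <- s) F k.
Proof.
elim: s => [|a s IH] //; rewrite in_cons big_cons; case/orP=> [/eqP->|js].
  by rewrite le_max lexx.
by rewrite le_max IH ?orbT.
Qed.

End Helpers.


Section Analytic.
Variables (R : realType) (n m : nat) (A : 'M[R]_(n, m)).

Lemma gram_ii_ge0 i : 0 <= gram A i i.
Proof. by apply: sumr_ge0 => k _; rewrite -expr2 sqr_ge0. Qed.

Lemma gram_ii_gt0 j : col j A != 0 -> 0 < gram A j j.
Proof.
move=> Hc; rewrite lt_def gram_ii_ge0 andbT; apply: contra Hc.
have P0 : forall k : 'I_n, true -> 0 <= A k j * A k j by move=> k _; rewrite -expr2 sqr_ge0.
move/eqP/(psumr_eq0P P0) => H.
apply/eqP/matrixP => k l; rewrite !mxE; have := H k isT; move/eqP.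
by rewrite mulf_eq0 orbb => /eqP.
Qed.

Lemma nu_ge0 i : 0 <= nu A i.
Proof.
rewrite /nu; apply: (big_ind (fun x : R => 0 <= x)) => //.
  by move=> a b a0 b0; rewrite le_max a0.
by move=> j _; rewrite divr_ge0 ?normr_ge0 ?gram_ii_ge0.
Qed.

Lemma nu_ge i j : j != i -> `|gram A i j| / gram A i i <= nu A i.
Proof.
by move=> ji; rewrite /nu -big_filter; apply: (@le_bigmax0 R _ (fun j => `|gram A i j| / gram A i i)); rewrite mem_filter mem_index_enum andbT.
Qed.

Lemma rho_ge0 i : 0 <= rho A i.
Proof. by rewrite /rho divr_ge0 ?addr_ge0 ?nu_ge0. Qed.

Lemma kernel_bound (h : 'cV[R]_m) : A *m h = 0 -> (forall j : 'I_m, col j A != 0) ->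
  forall i, `|h i 0| <= rho A i * l1norm h.
Proof.
move=> Hh Hc i.
have g0 := gram_ii_gt0 i (Hc i).
have key : \sum_j gram A i j * h j 0 = 0.
  transitivity (\sum_k A k i * (A *m h) k 0).
    rewrite /gram; under eq_bigr do rewrite big_distrl /=.
    rewrite exchange_big; apply: eq_bigr => k _; rewrite mxE big_distrr.
    by apply: eq_bigr => j _; rewrite /= mulrA.
  by rewrite Hh big1 // => k _; rewrite mxE mulr0.
rewrite (bigD1 i) //= in key.
have e1 : gram A i i * h i 0 = - \sum_(j < m | j != i) gram A i j * h j 0.
  by apply/eqP; rewrite -subr_eq0 opprK key.
have nu0 := nu_ge0 i.
have hN : l1norm h = `|h i 0| + \sum_(j < m | j != i) `|h j 0|.
  by rewrite /l1norm (bigD1 i).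
have b1 : gram A i i * `|h i 0| <= gram A i i * (nu A i * \sum_(j < m | j != i) `|h j 0|).
  rewrite -{1}(ger0_norm (ltW g0)) -normrM e1 normrN.
  apply: le_trans (ler_norm_sum _ _ _) _.
  rewrite mulr_sumr mulr_sumr; apply: ler_sum => j ji.
  rewrite normrM mulrA ler_wpM2r ?normr_ge0 //.
  have := nu_ge i j ji; rewrite ler_pdivrMr // => H; by rewrite mulrC.
rewrite ler_pM2l // in b1.
move: b1; rewrite hN /rho; set s := \sum_(j < m | j != i) _ => b1.
have nu1 : 0 < nu A i + 1 by rewrite ltr_wpDl.
rewrite mulrAC ler_pdivlMr //.
nra.
Qed.

Lemma sumS_bound (S : {set 'I_m}) : (#|S| <= lstar A)%N -> \sum_(i in S) rho A i < 2^-1.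
Proof.
move=> HS.
pose ge := fun a b : R => b <= a.
have ge_tot : total ge by move=> a b; exact: le_total.
have ge_tr : transitive ge.
  by move=> y0 x0 z0; rewrite /ge => h1 h2; exact: le_trans h2 h1.
pose t0 := [seq rho A i | i <- enum S].
have e0 : \sum_(i in S) rho A i = \sum_(r <- t0) r by rewrite big_map big_enum.
have sub0 : subseq t0 [seq rho A i | i <- enum 'I_m].
  by apply: map_subseq; rewrite enumT; exact: filter_subseq.
pose u := sorted_rho A.
have sub1 : subseq (sort ge t0) u := subseq_sort ge_tot ge_tr sub0.
have su : sorted ge u := sort_sorted ge_tot _.
have au : all (fun y => 0 <= y) u.
  rewrite /u /sorted_rho (perm_all _ (permEl (perm_sort _ _))) all_map.
  by apply/allP => i _; exact: rho_ge0.
have := @sorted_sub R u su au _ sub1.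
rewrite size_sort size_map -cardE (perm_big _ (permEl (perm_sort ge t0))) /= -e0 => H1.
apply: le_lt_trans H1 _.
have H2 : \sum_(r <- take #|S| u) r <= \sum_(r <- take (lstar A) u) r.
  rewrite -(take_takel _ HS); apply: sum_take_le; apply/allP => y /mem_take.
  exact: (allP au).
apply: le_lt_trans H2 _.
pose P := fun l : 'I_m.+1 => \sum_(r <- take l (sorted_rho A)) r < 2^-1.
have c0 : (0 < #|P|)%N.
  apply/card_gt0P; exists ord0; rewrite unfold_in /P /= take0 big_nil.
  by rewrite invr_gt0 ltr0n.
case: (@eq_bigmax_cond _ P (fun l : 'I_m.+1 => nat_of_ord l) c0) => l0 Pl0 E.
have LE : lstar A = l0 := E.
by rewrite LE; exact: Pl0.
Qed.

End Analytic.

Theorem corollary1 (R : realType) (n m : nat) (A : 'M[R]_(n, m)) :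
  (n < m)%N ->
  (forall j : 'I_m, col j A != 0) ->
  forall x : 'cV[R]_m, (l0norm x <= lstar A)%N ->
  forall z : 'cV[R]_m, A *m z = A *m x -> z != x -> l1norm x < l1norm z.
Proof.
move=> _ Hc x Hx z Hz Hzx.
set h := z - x.
have Hh : A *m h = 0 by rewrite /h mulmxBr Hz subrr.
have hb := @kernel_bound R n m A h Hh Hc.
have hE : forall i, z i 0 = x i 0 + h i 0.
  by move=> i; rewrite /h !mxE addrCA subrr addr0.
have N0 : 0 < l1norm h.
  rewrite lt_def sumr_ge0 ?andbT => [|i _]; last exact: normr_ge0.
  apply: contra Hzx => /eqP.
  have P0 : forall i : 'I_m, true -> 0 <= `|h i 0| by move=> i _; exact: normr_ge0.
  move/(psumr_eq0P P0) => H; apply/eqP/matrixP => i j.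
  rewrite (ord1 j) hE; have /eqP := H i isT; rewrite normr_eq0 => /eqP ->.
  by rewrite addr0.
set S := [set i | x i 0 != 0].
have sumS : \sum_(i in S) rho A i < 2^-1 by apply: sumS_bound.
have hS : \sum_(i in S) `|h i 0| <= (\sum_(i in S) rho A i) * l1norm h.
  by rewrite mulr_suml; apply: ler_sum => i _; exact: hb.
have pt : forall i, `|x i 0| + `|h i 0| <= `|z i 0| + (if i \in S then 2 * `|h i 0| else 0).
  move=> i; rewrite hE; case: ifP => iS.
    have := lerB_normD (x i 0) (h i 0); lra.
  move: iS; rewrite inE => /negbT; rewrite negbK => /eqP ->.
  by rewrite add0r normr0 add0r addr0.
have tot : l1norm x + l1norm h <= l1norm z + 2 * \sum_(i in S) `|h i 0|.
  rewrite /l1norm -big_split /= mulr_sumr [X in _ <= _ + X]big_mkcond /= -big_split /=.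
  apply: ler_sum => i _; apply: le_trans (pt i) _; case: ifP => //.
have : 0 <= \sum_(i in S) rho A i by apply: sumr_ge0 => i _; exact: rho_ge0.
nra.
Qed.
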